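(* Let $G$ be a finite abelian group of order $mn$, let $N \le G$ be a subgroup of order $n$, and let $D \subseteq G$ be a semiregular $(m,n,k,\lambda_1,\lambda_2)$-divisible difference set in $G$ relative to $N$. Let $\{\eta_j\}_{j=1}^m$ be an enumeration of $N^\perp$, let $\{\chi_i\}_{i=1}^n$ be a set of coset representatives of $\widehat{G}/N^\perp$, and for $1\le i\le n$, $1\le j\le m$ let $e^i_j := \frac{1}{\sqrt{k}}((\chi_i\eta_j)(g))_{g\in D}\in\mathbb{C}^k$ and $\mathcal{W}_i=\operatorname{span}\{e^i_j\}_{j=1}^m$. Let $\{h_\ell\}_{\ell=1}^m$ be a set of coset representatives of $G/N$ and define the $m\times m$ matrix \[ U=\frac{1}{\sqrt{m}}\big(\eta_j(h_\ell)\big)_{\ell,j=1}^m \] (row index $\ell$, column index $j$). For each $i$ define $\tilde L_i=(\tilde e^i_1|\cdots|\tilde e^i_m):=(e^i_1|\cdots|e^i_m)\,U^*$. Then for all $i\in\{1,\dots,n\}$, $\mathcal{W}_i=\operatorname{span}\{\tilde e^i_j\}_{j=1}^m$, the vectors $\{\tilde e^i_j\}_{j=1,i=1}^{m,n}$ are almost flat, and each vector $\tilde e^i_j$ has exactly $k/m$ nonzero coordinates.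
   Context: $\widehat{G}$ is the group of characters (homomorphisms $G\to\{z\in\mathbb{C}:|z|=1\}$) of $G$, and $N^\perp=\{\chi\in\widehat{G}:\chi(h)=1\ \forall h\in N\}$. A subset $D\subseteq G$ with $|D|=k$ is an $(m,n,k,\lambda_1,\lambda_2)$-divisible difference set relative to $N$ (with $|G|=mn$, $|N|=n$) if the multiset $\{d-d': d,d'\in D,d\ne d'\}$ contains each element of $G\setminus N$ exactly $\lambda_2$ times and each element of $N\setminus\{0\}$ exactly $\lambda_1$ times; it is semiregular if $k>\lambda_1$ and $k^2=\lambda_2mn$. A collection of vectors is almost flat if all nonzero coordinates of all the vectors have the same modulus. *)

(* Defs.v *)
(* G is a finite abelian group written multiplicatively
   (the whole type gT); complex numbers are algC. *)
From HB Require Import structures.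
From mathcomp Require Import all_boot all_order all_algebra all_fingroup all_field.
Set Implicit Arguments. Unset Strict Implicit. Unset Printing Implicit Defensive.
Import Order.TTheory GRing.Theory Num.Theory.
Local Open Scope ring_scope.

Section Defs.
Variable gT : finGroupType.

Definition is_character (chi : {ffun gT -> algC}) : Prop :=
  (forall x y : gT, chi (x * y)%g = chi x * chi y) /\ (forall x : gT, `|chi x| = 1).

Definition in_perp (N : {set gT}) (chi : {ffun gT -> algC}) : Prop :=
  is_character chi /\ (forall h, h \in N -> chi h = 1).

(* number of ordered pairs (d,d') in D x D, d <> d', with d - d' = g
   (additive "d - d'" is "d * d'^-1" in multiplicative notation) *)
Definition diff_count (D : {set gT}) (g : gT) : nat :=
  #|[set p in setX D D | (p.1 != p.2) && ((p.1 * p.2^-1)%g == g)]|.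

Definition is_divisible_diff_set (m n k l1 l2 : nat) (N : {set gT}) (D : {set gT}) : Prop :=
  [/\ #|gT| = (m * n)%N, #|N| = n, #|D| = k,
      (forall g, g \notin N -> diff_count D g = l2) &
      (forall g, g \in N -> g != 1%g -> diff_count D g = l1)].

Definition is_semiregular_DDS (m n k l1 l2 : nat) (N : {set gT}) (D : {set gT}) : Prop :=
  [/\ is_divisible_diff_set m n k l1 l2 N D, (l1 < k)%N & (k ^ 2 = l2 * m * n)%N].

(* The matrix (e^i_1 | ... | e^i_m): column j is e^i_j in C^k, coordinates
   indexed by the elements of D (through enum_val). *)
Definition Lmat (D : {set gT}) (m : nat) (chi : {ffun gT -> algC})
  (eta : 'I_m -> {ffun gT -> algC}) : 'M[algC]_(#|D|, m) :=
  \matrix_(t < #|D|, j < m) ((chi (enum_val t) * eta j (enum_val t)) / sqrtC (#|D|%:R)).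

Definition Umat (m : nat) (eta : 'I_m -> {ffun gT -> algC}) (h : 'I_m -> gT) : 'M[algC]_m :=
  \matrix_(l < m, j < m) (eta j (h l) / sqrtC (m%:R)).

Definition adjmx (p q : nat) (A : 'M[algC]_(p, q)) : 'M[algC]_(q, p) :=
  (map_mx (fun x : algC => x^*) A)^T.

Definition Ltilde (D : {set gT}) (m : nat) (chi : {ffun gT -> algC})
  (eta : 'I_m -> {ffun gT -> algC}) (h : 'I_m -> gT) : 'M[algC]_(#|D|, m) :=
  Lmat D chi eta *m adjmx (Umat eta h).

End Defs.

(* Main.v *)
Require Import Defs.
From HB Require Import structures.
From mathcomp Require Import all_boot all_order all_algebra all_fingroup all_field.
From mathcomp Require Import ring zify.
Import Order.TTheory GRing.Theory Num.Theory.
Local Open Scope ring_scope.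

Lemma sq_eq (m k : nat) (a : 'I_m -> nat) :
  (\sum_j a j)%N = k -> ((\sum_j a j * a j) * m)%N = (k * k)%N ->
  forall j, (a j * m)%N = k.
Proof.
move=> Hs Hq.
have Hn : (\sum_j ((a j * m) ^ 2 + k ^ 2) = \sum_j (2 * k * (a j * m)))%N.
  rewrite big_split /= sum_nat_const card_ord -big_distrr /= -big_distrl /= Hs.
  under eq_bigr do rewrite expnMn.
  rewrite -big_distrl /=.
  have -> : (\sum_(i < m) a i ^ 2 = \sum_(i < m) a i * a i)%N.
    by apply: eq_bigr => i _; rewrite mulnn.
  move: Hq; set S := (\sum_(i < m) _)%N => Hq.
  have -> : (S * m ^ 2 = (S * m) * m)%N by rewrite -mulnA mulnn.
  rewrite Hq; ring.
have H0 : \sum_j (((a j * m)%:R - k%:R) ^+ 2 : int) = 0.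
  have E : forall j, (((a j * m)%:R - k%:R) ^+ 2 : int) =
     ((a j * m) ^ 2 + k ^ 2)%N%:R - (2 * k * (a j * m))%N%:R.
    by move=> j; rewrite !natrD !natrX !natrM; ring.
  under eq_bigr do rewrite E.
  by rewrite sumrB -!natr_sum Hn subrr.
move=> j; have := @psumr_eq0P _ _ predT _ (fun i _ => sqr_ge0 ((a i * m)%:R - k%:R : int)) H0 j isT.
by move/eqP; rewrite sqrf_eq0 subr_eq0 => /eqP /eqP; rewrite eqr_nat => /eqP.
Qed.


Lemma card_part (T J : finType) (S : {set T}) (f : T -> J) (Q : pred J) :
  #|[set x in S | Q (f x)]| = (\sum_(j | Q j) #|[set x in S | f x == j]|)%N.
Proof.
rewrite -sum1_card (partition_big f Q); last by move=> x; rewrite inE => /andP[].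
apply: eq_bigr => j Qj; rewrite -sum1_card; apply: eq_bigl => x; rewrite !inE.
by case: (x \in S) => //=; case: eqP => [->|]; rewrite ?Qj ?andbF.
Qed.

Lemma card_partT (T J : finType) (S : {set T}) (f : T -> J) :
  #|S| = (\sum_j #|[set x in S | f x == j]|)%N.
Proof.
rewrite -(card_part _ _ S f predT); apply: eq_card => x; by rewrite !inE andbT.
Qed.

Lemma count_cosets (gT : finGroupType) (m n k l1 l2 : nat) (N : {group gT})
  (D : {set gT}) (c : gT -> 'I_m) :
  is_semiregular_DDS m n k l1 l2 N D ->
  (forall x y, (c x == c y) = (x * y^-1 \in N)%g) ->
  ((\sum_j #|[set d in D | c d == j]| * #|[set d in D | c d == j]|) * m = k * k)%N.
Proof.
case=> [[HG HN HD H2 H1] _ Hk] Hc.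
pose f (p : gT * gT) := (p.1 * p.2^-1)%g.
pose C g := #|[set p in setX D D | f p == g]|.
have C1 : C 1%g = k.
  rewrite /C -HD -(card_imset (mem D) (fun x y (E : (x, x) = (y, y)) => congr1 fst E)).
  apply: eq_card => -[x y]; rewrite !inE /f /= divg_eq1.
  apply/idP/imsetP => [/andP[/andP[xD _] /eqP <-]|[z zD [-> ->]]]; first by exists x.
  by rewrite zD eqxx.
have Cg : forall g, g != 1%g -> C g = diff_count D g.
  move=> g ng; rewrite /C /diff_count; apply: eq_card => -[x y]; rewrite !inE /f /=.
  case: (eqVneq (x * y^-1)%g g) => [E|]; rewrite ?andbF ?andbT //.
  case: (eqVneq x y) => [Exy|]; rewrite ?andbT //.
  by move: ng; rewrite -E Exy mulgV eqxx.
have Htot : (k * k = \sum_g C g)%N.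
  by rewrite -HD -cardsX (card_partT _ _ _ f).
have HT : (#|[set p in setX D D | f p \in N]| = \sum_(g in N) C g)%N.
  exact: (card_part _ _ _ f (fun g => g \in N)).
have SN : (\sum_(g in N) C g = k + #|N :\ 1%g| * l1)%N.
  rewrite (bigD1 1%g) ?group1 //= C1; congr (_ + _); rewrite -sum_nat_const.
  apply: eq_big => g; first by rewrite !inE andbC.
  by move=> /andP[gN g1]; rewrite Cg // H1.
have SC : (\sum_(g | g \notin N) C g = #|~: N| * l2)%N.
  rewrite -sum_nat_const; apply: eq_big => g; first by rewrite inE.
  move=> gN; rewrite Cg ?H2 //; apply: contraNneq gN => ->; exact: group1.
have Htot2 : (k * k = (k + #|N :\ 1%g| * l1) + #|~: N| * l2)%N.
  by rewrite Htot (bigID (fun g => g \in N)) /= SN SC.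
have cN : (#|N :\ 1%g|).+1 = n by rewrite -HN (cardsD1 1%g N) group1.
have cC : (#|~: N| + n = m * n)%N by rewrite -HG -HN addnC cardsC.
have HT2 : (#|[set p in setX D D | f p \in N]| * m = k * k)%N.
  move: Htot2 cN cC; rewrite HT SN.
  set a := #|N :\ 1%g|; set b := #|~: N|; set T := (k + a * l1)%N => E1 cN cC.
  have E2 : (T + b * l2 = l2 * (b + n))%N by rewrite -E1 mulnn Hk cC mulnA.
  have E3 : T = (l2 * n)%N by move: E2; rewrite mulnDr; lia.
  by rewrite E3 mulnn Hk mulnAC.
rewrite -HT2; congr (_ * m)%N.
rewrite (card_partT _ _ [set p in setX D D | f p \in N] (fun p => c p.1)).
apply: eq_bigr => j _; rewrite -cardsX; apply: eq_card => -[x y]; rewrite !inE /f /= -Hc.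
case: (x \in D); case: (y \in D) => //=; try by rewrite andbF.
case: (eqVneq (c x) j) => [->|_]; last by rewrite andbF.
by rewrite andbT eq_sym.
Qed.


Lemma char1 (gT : finGroupType) (psi : {ffun gT -> algC}) :
  is_character psi -> psi 1%g = 1.
Proof.
case=> HM Hn; have nz : psi 1%g != 0 by rewrite -normr_eq0 Hn oner_eq0.
by apply: (mulfI nz); rewrite mulr1 -HM mulg1.
Qed.

Lemma char_conj (gT : finGroupType) (psi : {ffun gT -> algC}) x :
  is_character psi -> psi x * (psi x)^* = 1.
Proof. by case=> _ Hn; rewrite -normCK Hn expr1n. Qed.

Lemma perpN (gT : finGroupType) (N : {group gT}) (psi : {ffun gT -> algC}) x y :
  in_perp N psi -> y \in N -> psi (x * y)%g = psi x.
Proof. rewrite /in_perp /is_character => -[[HM _] H1] yN; by rewrite HM (H1 _ yN) mulr1. Qed.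

Lemma c_eq (gT : finGroupType) m (N : {group gT}) (h : 'I_m -> gT) (c : gT -> 'I_m) :
  (forall x y : gT, commute x y) ->
  (forall g, ((h (c g))^-1 * g \in N)%g) ->
  (forall g l, ((h l)^-1 * g \in N)%g -> l = c g) ->
  forall x y, (c x == c y) = (x * y^-1 \in N)%g.
Proof.
move=> comm hc hu x y; apply/eqP/idP => [E|xyN].
  have A := hc x; have B := hc y; rewrite E in A.
  have := groupM (groupVr B) A.
  by rewrite invgM invgK -mulgA mulVKg comm.
apply: esym; apply: hu.
have -> : ((h (c y))^-1 * x = ((h (c y))^-1 * y) * (y^-1 * x))%g by rewrite -mulgA mulVKg.
by rewrite groupM // -comm.
Qed.

Lemma orth (gT : finGroupType) m (N : {group gT}) (eta : 'I_m -> {ffun gT -> algC})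
  (h : 'I_m -> gT) (c : gT -> 'I_m) :
  (forall x y : gT, commute x y) -> injective eta -> (forall j, in_perp N (eta j)) ->
  (forall g, ((h (c g))^-1 * g \in N)%g) ->
  (forall g l, ((h l)^-1 * g \in N)%g -> l = c g) ->
  forall j j', \sum_(l < m) eta j (h l) * (eta j' (h l))^* = (j == j')%:R * m%:R.
Proof.
move=> comm inj perp hc hu j j'.
case: (eqVneq j j') => [<-|neq].
  rewrite mul1r; under eq_bigr => l _ do rewrite (@char_conj _ _ (h l) (perp j).1).
  by rewrite sumr_const card_ord.
rewrite mul0r.
pose F x := eta j x * (eta j' x)^*.
have FM : forall x y, F (x * y)%g = F x * F y.
  by move=> x y; rewrite /F (perp j).1.1 (perp j').1.1 rmorphM /=; ring.
have [y Fy] : exists y, F y != 1.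
  have neqe : eta j != eta j' by apply: contra_neq neq => /inj.
  case: (boolP [exists x, eta j x != eta j' x]) => [/existsP [y Hy]|/existsPn H].
    exists y; apply: contra_neq Hy => E.
    have := congr1 (fun z => z * eta j' y) E.
    by rewrite mul1r /F -mulrA [_^* * _]mulrC char_conj ?mulr1 //; case: (perp j').
  by move/eqP: neqe; case; apply/ffunP => x; apply/eqP; rewrite -[_ == _]negbK H.
have ceq := @c_eq _ _ _ _ _ comm hc hu.
pose sg l := c (h l * y)%g.
have sgI : injective sg.
  move=> l l' E.
  have : c (h l) == c (h l').
    rewrite ceq.
    have := (ceq (h l * y) (h l' * y))%g; rewrite -/(sg l) -/(sg l') E eqxx.
    by move/esym; rewrite invgM mulgA mulgK.
  have hl : forall l0, c (h l0) = l0 by move=> l0; apply: esym; apply: hu; rewrite mulVg group1.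
  by rewrite !hl => /eqP.
have Fs : forall l, F (h (sg l)) = F (h l) * F y.
  have Fn : forall n0, n0 \in N -> F n0 = 1.
    by move=> n0 nN; rewrite /F !(perp _).2 // conjC1 mulr1.
  move=> l; rewrite -FM.
  by rewrite -(mulVKg (h (sg l)) (h l * y)%g) FM (Fn _ (hc (h l * y)%g)) mulr1.
have : \sum_(l < m) F (h l) * (F y - 1) = 0.
  rewrite -mulr_suml mulrBr mulr1.
  rewrite {2}(reindex_inj sgI) /=.
  under [X in _ - X]eq_bigr do rewrite Fs.
  by rewrite -mulr_suml subrr.
by rewrite -mulr_suml => /eqP; rewrite mulf_eq0 subr_eq0 (negbTE Fy) orbF => /eqP.
Qed.

Theorem mainTheorem2 (gT : finGroupType) (m n k l1 l2 : nat)
  (N : {group gT}) (D : {set gT})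
  (eta : 'I_m -> {ffun gT -> algC}) (chi : 'I_n -> {ffun gT -> algC})
  (h : 'I_m -> gT) :
  abelian [set: gT] ->
  is_semiregular_DDS m n k l1 l2 N D ->
  (* {eta_j} is an enumeration of N^perp *)
  injective eta ->
  (forall j, in_perp N (eta j)) ->
  (forall psi, in_perp N psi -> exists j, eta j = psi) ->
  (* {chi_i} is a set of coset representatives of Ghat / N^perp *)
  (forall i, is_character (chi i)) ->
  (forall psi, is_character psi ->
     exists! i, forall x, x \in N -> psi x = chi i x) ->
  (* {h_l} is a set of coset representatives of G / N *)
  (forall g : gT, exists! l, ((h l)^-1 * g)%g \in N) ->
  [/\ (* W_i = span of the columns of L_i equals span of the columns of tilde L_i *)
      (forall i, ((Lmat D (chi i) eta)^T == (Ltilde D (chi i) eta h)^T)%MS),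
      (* almost flat: all nonzero coordinates of all tilde e^i_j have equal modulus *)
      (exists c : algC, forall i j t, Ltilde D (chi i) eta h t j != 0 ->
          `|Ltilde D (chi i) eta h t j| = c) &
      (* each tilde e^i_j has exactly k/m nonzero coordinates *)
      (forall i j, (#|[set t | Ltilde D (chi i) eta h t j != 0%R]| * m)%N = k)].
Proof.
move=> Hab Hsr inj perp _ Hchi _ hcos.
have comm : forall x y : gT, commute x y.
  by move=> x y; apply: (centsP Hab); rewrite inE.
have hex : forall g, exists l, ((h l)^-1 * g)%g \in N.
  by move=> g; case: (hcos g) => l [Hl _]; exists l.
pose c g := xchoose (hex g).
have hc : forall g, ((h (c g))^-1 * g \in N)%g by move=> g; exact: (xchooseP (hex g)).
have hu : forall g l, ((h l)^-1 * g \in N)%g -> l = c g.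
  by move=> g l Hl; case: (hcos g) => l0 [_ U]; rewrite -(U l Hl) -(U (c g) (hc g)).
have ceq := @c_eq _ _ _ _ _ comm hc hu.
have orthj := @orth _ _ _ _ _ _ comm inj perp hc hu.
have Hm : (0 < m)%N.
  case: Hsr => -[HG _ _ _ _] _ _.
  have : (0 < #|gT|)%N by apply/card_gt0P; exists 1%g.
  by rewrite HG muln_gt0 => /andP[].
pose s := sqrtC (m%:R : algC).
have s_conj : s^* = s by apply: geC0_conj; rewrite sqrtC_ge0 ler0n.
have s2 : s * s = m%:R by rewrite -expr2 sqrtCK.
have s_nz : s != 0 by rewrite sqrtC_eq0 pnatr_eq0 -lt0n.
pose U := Umat eta h.
pose V := adjmx U.
have HVU : V *m U = 1%:M.
  apply/matrixP => i j; rewrite !mxE.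
  have E : forall l, V i l * U l j = eta j (h l) * (eta i (h l))^* / (s * s).
    move=> l; rewrite /V /U /adjmx !mxE rmorphM /= fmorphV /= s_conj.
    by rewrite -/s; field.
  rewrite (eq_bigr _ (fun l _ => E l)).
  rewrite -mulr_suml orthj s2 eq_sym mulfK //.
  by rewrite pnatr_eq0 -lt0n.
have HUV : U *m V = 1%:M by apply: mulmx1C.
have HUVe : forall a b, \sum_l U a l * V l b = (a == b)%:R.
  by move=> a b; have := congr1 (fun M : 'M[algC]_m => M a b) HUV; rewrite !mxE.
pose r := sqrtC (#|D|%:R : algC).
have cst : forall l x, eta l x = eta l (h (c x)).
  by move=> l x; rewrite -{1}(mulVKg (h (c x)) x) (@perpN _ _ _ _ _ (perp l) (hc x)).
have Lt : forall i t j, Ltilde D (chi i) eta h t j =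
    chi i (enum_val t) * (s / r) * (c (enum_val t) == j)%:R.
  move=> i t j; rewrite /Ltilde -/U -/V mxE.
  have E : forall l, Lmat D (chi i) eta t l * V l j =
      chi i (enum_val t) * (s / r) * (U (c (enum_val t)) l * V l j).
    move=> l; rewrite /U !mxE -cst /r; rewrite -/s.
    have rnz : sqrtC (#|D|%:R : algC) != 0.
      by rewrite sqrtC_eq0 pnatr_eq0 -lt0n; apply: (leq_ltn_trans _ (ltn_ord t)).
    rewrite !rmorphM /= !fmorphV /= s_conj.
    by field; rewrite s_nz rnz.
  rewrite (eq_bigr _ (fun l _ => E l)).
  by rewrite -mulr_sumr HUVe.
have chi_nz : forall i x, chi i x != 0.
  by move=> i x; rewrite -normr_eq0 (Hchi i).2 oner_eq0.
split.
- move=> i; rewrite /Ltilde trmx_mul; apply/eqmxP; apply: eqmx_sym.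
  apply: eqmxMfull; rewrite row_full_unit unitmx_tr.
  by have [] := mulmx1_unit HVU.
- exists (s / r) => i j t; rewrite Lt.
  case: (_ == j) => /=; rewrite ?mulr0 ?eqxx //= => _.
  rewrite mulr1 normrM (Hchi i).2 mul1r ger0_norm //.
  by rewrite divr_ge0 // sqrtC_ge0 ler0n.
- move=> i j.
  have E1 : #|[set t | Ltilde D (chi i) eta h t j != 0]| =
            #|[set t : 'I_#|D| | c (enum_val t) == j]|.
    apply: eq_card => t; rewrite !inE Lt.
    have rnz : r != 0.
      by rewrite sqrtC_eq0 pnatr_eq0 -lt0n; apply: (leq_ltn_trans _ (ltn_ord t)).
    case: (_ == j) => /=; rewrite ?mulr0 ?eqxx // mulr1.
    by rewrite !mulf_neq0 // ?chi_nz // invr_eq0.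
  have E2 : #|[set t : 'I_#|D| | c (enum_val t) == j]| = #|[set d in D | c d == j]|.
    rewrite -!sum1_card.
    rewrite (eq_bigl (fun t : 'I_#|D| => c (enum_val t) == j)); last by move=> t; rewrite inE.
    rewrite -[RHS]sum1_card.
    rewrite (eq_bigl (fun d => (d \in D) && (c d == j))); last by move=> d; rewrite inE.
    by rewrite big_mkcondr [in RHS]big_enum_val -big_mkcond.
  rewrite E1 E2.
  case: Hsr => -[HG HN HD H2 H1] Hl Hk.
  apply: (sq_eq _ _ (fun j => #|[set d in D | c d == j]|)).
    by rewrite -HD (card_partT _ _ D c).
  exact: (@count_cosets _ _ _ _ _ _ _ _ _ (And3 (And5 HG HN HD H2 H1) Hl Hk) ceq).
Qed.
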